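(* Let $L>0$, $\mathbb{T}=[0,L]$ with periodic boundary conditions, $N\ge1$, $D_i>0$, $h_{ij}\in\mathbb{R}$, and $K:\mathbb{T}\to\mathbb{R}$, $K\ge0$, a zero-mean probability density that is twice differentiable with $K'\in L^\infty(\mathbb{T})$. Let $u_0\in C^2(\mathbb{T})^N$ with $u_0(x)>0$ for all $x\in\mathbb{T}$, and let $u$ be the unique solution of \[ \partial_tu_i=D_i\partial_x^2u_i-\partial_x\Big[u_i\,\partial_x\sum_{j=1}^Nh_{ij}(K\ast u_j)\Big],\quad i=1,\dots,N,\qquad u(\cdot,0)=u_0, \] which satisfies $u\in C^1((0,T_* ),L^2(\mathbb{T}))^N\cap C^0([0,T_* ),C^2(\mathbb{T}))^N$, where $T_*=\infty$ if $\|u(t)\|_{L^1}$ is bounded for all time and otherwise $T_*$ is the earliest time at which $\|u(t)\|_{L^1}=2\|u_0\|_{L^1}$. Then $T_*=\infty$, i.e. the solution is global in time.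
   Context: $(K\ast f)(x)=\int_0^LK(x-y)f(y)\,dy$ with periodic extension; for vector-valued $g$, $\|g\|_{L^1}=\sum_i\|g_i\|_{L^1}$. *)

(* Defs.v *)
From Stdlib Require Import Reals.
From Coquelicot Require Import Coquelicot.
Open Scope R_scope.

Fixpoint sumR (n : nat) (f : nat -> R) : R :=
  match n with O => 0 | S m => sumR m f + f m end.

(* functions on the torus [0,L] are represented by their L-periodic extension *)
Definition periodic (L : R) (f : R -> R) : Prop := forall x, f (x + L) = f x.

Definition conv (L : R) (K f : R -> R) (x : R) : R :=
  RInt (fun y => K (x - y) * f y) 0 L.

Definition L1norm (L : R) (N : nat) (g : nat -> R -> R) : R :=
  sumR N (fun i => RInt (fun x => Rabs (g i x)) 0 L).

Definition C2per (L : R) (f : R -> R) : Prop :=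
  periodic L f /\
  forall x, ex_derive f x /\ ex_derive (Derive f) x /\ continuous (Derive_n f 2) x.

Definition admissible_kernel (L : R) (K : R -> R) : Prop :=
  periodic L K /\
  (forall x, 0 <= K x) /\
  ex_RInt K 0 L /\ RInt K 0 L = 1 /\
  ex_RInt (fun x => x * K x) (- (L / 2)) (L / 2) /\
  RInt (fun x => x * K x) (- (L / 2)) (L / 2) = 0 /\
  (forall x, ex_derive K x /\ ex_derive (Derive K) x) /\
  (exists M, forall x, Rabs (Derive K x) <= M).

Definition rhs (L : R) (N : nat) (D : nat -> R) (h : nat -> nat -> R)
  (K : R -> R) (u : nat -> R -> R -> R) (i : nat) (t x : R) : R :=
  D i * Derive_n (u i t) 2 x
  - Derive (fun y => u i t y *
        Derive (fun z => sumR N (fun j => h i j * conv L K (u j t) z)) y) x.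

Definition in_time (T : Rbar) (t : R) : Prop := 0 <= t /\ Rbar_lt (Finite t) T.

(* u = (u_0,...,u_{N-1}), u i t x = u_i(x,t), is a solution on [0,T) in the class
   C^1((0,T),L^2(T))^N  cap  C^0([0,T),C^2(T))^N with u(.,0) = u0 *)
Definition is_solution (L : R) (N : nat) (D : nat -> R) (h : nat -> nat -> R)
  (K : R -> R) (u0 : nat -> R -> R) (T : Rbar) (u : nat -> R -> R -> R) : Prop :=
  (forall i, (i < N)%nat -> forall x, u i 0 x = u0 i x) /\
  (forall i t, (i < N)%nat -> in_time T t -> C2per L (u i t)) /\
  (* continuity of t |-> u(t) in C^2(T) on [0,T) *)
  (forall i t, (i < N)%nat -> in_time T t ->
     forall eps, 0 < eps -> exists delta, 0 < delta /\
       forall s, in_time T s -> Rabs (s - t) < delta ->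
         forall k x, (k <= 2)%nat ->
           Rabs (Derive_n (u i s) k x - Derive_n (u i t) k x) < eps) /\
  (* t |-> u(t) is C^1 on (0,T) with values in L^2(T), its derivative being the rhs *)
  (forall i t, (i < N)%nat -> 0 < t -> in_time T t ->
     filterlim
       (fun s => RInt (fun x => ((u i s x - u i t x) / (s - t) - rhs L N D h K u i t x) ^ 2) 0 L)
       (locally' t) (locally 0)) /\
  (forall i t, (i < N)%nat -> 0 < t -> in_time T t ->
     filterlim
       (fun s => RInt (fun x => (rhs L N D h K u i s x - rhs L N D h K u i t x) ^ 2) 0 L)
       (locally t) (locally 0)).

Definition is_Tstar (L : R) (N : nat) (u0 : nat -> R -> R) (u : nat -> R -> R -> R)
  (T : Rbar) : Prop :=
  (T = p_infty /\ exists M, forall t, 0 <= t -> L1norm L N (fun i => u i t) <= M)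
  \/
  (exists T' : R, T = Finite T' /\
     (forall t, 0 <= t < T' -> L1norm L N (fun i => u i t) < 2 * L1norm L N u0) /\
     filterlim (fun t => L1norm L N (fun i => u i t)) (at_left T')
               (locally (2 * L1norm L N u0))).

(* Main.v *)
Require Import Defs.
From Stdlib Require Import Reals Lra Psatz Classical.
From Coquelicot Require Import Coquelicot.
Open Scope R_scope.


Lemma cR_mult (f g : R -> R) x : continuous f x -> continuous g x -> continuous (fun y => f y * g y) x.
Proof. intros; now apply (continuous_mult f g). Qed.
Lemma cR_plus (f g : R -> R) x : continuous f x -> continuous g x -> continuous (fun y => f y + g y) x.
Proof. intros; now apply (continuous_plus f g). Qed.
Lemma cR_minus (f g : R -> R) x : continuous f x -> continuous g x -> continuous (fun y => f y - g y) x.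
Proof. intros; now apply (continuous_minus f g). Qed.
Lemma cR_opp (f : R -> R) x : continuous f x -> continuous (fun y => - f y) x.
Proof. intros; now apply (continuous_opp f). Qed.
Lemma cR_const (c : R) x : continuous (fun _ : R => c) x.
Proof. apply continuous_const. Qed.
Lemma cR_id x : continuous (fun y : R => y) x.
Proof. apply continuous_id. Qed.
Lemma cR_abs (f : R -> R) x : continuous f x -> continuous (fun y => Rabs (f y)) x.
Proof. apply continuous_Rabs_comp. Qed.
Lemma cR_div (f : R -> R) c x : continuous f x -> continuous (fun y => f y / c) x.
Proof. intros; unfold Rdiv; apply cR_mult; auto; apply cR_const. Qed.
Lemma cR_pow (f : R -> R) n x : continuous f x -> continuous (fun y => f y ^ n) x.
Proof. intros; induction n; simpl. apply cR_const. now apply cR_mult. Qed.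
Lemma cR_app (g f : R -> R) x : (forall z, continuous g z) -> continuous f x -> continuous (fun y => g (f y)) x.
Proof. intros; apply continuous_comp; auto. Qed.

Ltac cont1 := match goal with
  | |- continuous (fun _ => ?c) _ => apply cR_const
  | |- continuous (fun y => y) _ => apply cR_id
  | |- continuous (fun y => @?f y * @?g y) _ => apply (cR_mult f g)
  | |- continuous (fun y => @?f y + @?g y) _ => apply (cR_plus f g)
  | |- continuous (fun y => @?f y - @?g y) _ => apply (cR_minus f g)
  | |- continuous (fun y => - @?f y) _ => apply (cR_opp f)
  | |- continuous (fun y => Rabs (@?f y)) _ => apply (cR_abs f)
  | |- continuous (fun y => @?f y / ?c) _ => apply (cR_div f c)
  | |- continuous (fun y => @?f y ^ ?n) _ => apply (cR_pow f n)
  | |- continuous (fun y => ?g (@?f y)) _ => apply (cR_app g f); [solve [auto] | ]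
  | |- continuous _ _ => solve [auto]
  end.
Ltac cont := repeat cont1.

Lemma cont_eps g x : continuous g x -> forall eps, 0 < eps ->
  exists d, 0 < d /\ forall y, Rabs (y - x) < d -> Rabs (g y - g x) < eps.
Proof.
  intros Hc eps He.
  destruct (proj1 (filterlim_locally _ _) Hc (mkposreal eps He)) as [d Hd].
  exists d. split. apply cond_pos. intros y Hy. apply Hd. exact Hy.
Qed.

Lemma deriv_by_rem f x l k : 0 <= k ->
  (forall y, Rabs (y - x) <= 1 -> Rabs (f y - f x - l * (y - x)) <= k * (y - x)^2) ->
  is_derive f x l.
Proof.
  intros Hk H. apply is_derive_Reals. intros eps Heps.
  assert (Hp : 0 < Rmin 1 (eps/(k+1))) by (apply Rmin_pos; [lra| apply Rdiv_lt_0_compat; lra]).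
  exists (mkposreal _ Hp). intros h Hh0 Hh. simpl in Hh.
  assert (H1 : Rabs h <= 1) by (left; eapply Rlt_le_trans; [apply Hh | apply Rmin_l]).
  assert (H2 : Rabs h < eps/(k+1)) by (eapply Rlt_le_trans; [apply Hh | apply Rmin_r]).
  specialize (H (x+h)). replace (x+h-x) with h in H by ring.
  specialize (H H1).
  replace ((f (x + h) - f x) / h - l) with ((f (x+h) - f x - l*h) * /h) by (field; auto).
  rewrite Rabs_mult, Rabs_inv.
  assert (H3 : 0 < Rabs h) by (apply Rabs_pos_lt; auto).
  assert (H4 : (k+1) * Rabs h < eps).
  { replace eps with ((k+1) * (eps/(k+1))) by (field; lra). apply Rmult_lt_compat_l; lra. }
  rewrite <- (pow2_abs h) in H.
  apply (Rmult_le_compat_r (/ Rabs h)) in H; [| left; apply Rinv_0_lt_compat; auto].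
  eapply Rle_lt_trans. apply H.
  replace (k * Rabs h ^ 2 * / Rabs h) with (k * Rabs h) by (field; lra). nra.
Qed.

(* the convex function F(s) = (s^-)^3 *)
Definition Fneg (s : R) := (Rabs s * s^2 - s^3)/2.
Definition dFneg (s : R) := 3*(Rabs s * s - s^2)/2.
Definition ddFneg (s : R) := 3*(Rabs s - s).

Ltac abscase x := destruct (Rle_or_lt 0 x); [rewrite (Rabs_pos_eq x) by lra | rewrite (Rabs_left x) by lra].

Lemma Fn_rem a b : Rabs (Fneg a - Fneg b - dFneg b * (a-b)) <= 3*(Rabs a + Rabs b)*(a-b)^2.
Proof.
  unfold Fneg, dFneg. pose proof (pow2_ge_0 (a-b)). abscase a; abscase b; apply Rabs_le; split.
  all: try nra.
  all: try (assert (0 <= (a+b)*(a-b)^2) by (apply Rmult_le_pos; lra); nra).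
  all: try (assert (0 <= -(a+b)*(a-b)^2) by (apply Rmult_le_pos; lra); nra).
Qed.

Lemma dFn_rem x y : Rabs (dFneg y - dFneg x - ddFneg x*(y-x)) <= 3*(y-x)^2.
Proof.
  unfold dFneg, ddFneg. pose proof (pow2_ge_0 (y-x)). abscase x; abscase y; apply Rabs_le; split; nra.
Qed.

Lemma Fn_deriv x : is_derive Fneg x (dFneg x).
Proof.
  apply (deriv_by_rem _ _ _ (3*(2*Rabs x+1))). pose proof (Rabs_pos x); lra.
  intros y Hy. eapply Rle_trans. apply Fn_rem.
  apply Rmult_le_compat_r. apply pow2_ge_0.
  assert (Rabs y <= Rabs x + 1).
  { replace y with (x + (y - x)) by ring. eapply Rle_trans. apply Rabs_triang. lra. }
  lra.
Qed.

Lemma dFn_deriv x : is_derive dFneg x (ddFneg x).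
Proof.
  apply (deriv_by_rem _ _ _ 3). lra. intros y _. apply dFn_rem.
Qed.

Lemma deriv_cont (f : R -> R) x l : is_derive f x l -> continuous f x.
Proof. intros H. apply (ex_derive_continuous f). now exists l. Qed.
Lemma Fn_cont x : continuous Fneg x.
Proof. eapply deriv_cont. apply Fn_deriv. Qed.
Lemma dFn_cont x : continuous dFneg x.
Proof. eapply deriv_cont. apply dFn_deriv. Qed.
Lemma ddFn_cont x : continuous ddFneg x.
Proof. unfold ddFneg. cont. Qed.

Lemma Fn_ge0 s : 0 <= Fneg s.
Proof. unfold Fneg. abscase s; nra. Qed.
Lemma ddFn_ge0 s : 0 <= ddFneg s.
Proof. unfold ddFneg. abscase s; nra. Qed.
Lemma Fn_id s : dFneg s * s - Fneg s = 2 * Fneg s.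
Proof. unfold Fneg, dFneg. field. Qed.
Lemma Fn_pos0 s : 0 <= s -> Fneg s = 0.
Proof. intros; unfold Fneg; rewrite Rabs_pos_eq by lra; field. Qed.
Lemma Fn_zero s : Fneg s = 0 -> 0 <= s.
Proof. unfold Fneg. intros H. destruct (Rle_or_lt 0 s). lra. rewrite Rabs_left in H by lra. exfalso.
  assert (0 < (-s)*(s*s)) by (apply Rmult_lt_0_compat; nra).
  replace (s^2) with (s*s) in H by ring; replace (s^3) with (s*(s*s)) in H by ring. lra. Qed.


Lemma eqR (x y : R) : x - y = 0 -> x = y. Proof. intros; lra. Qed.

Lemma exR (f : R -> R) a b : (forall x, continuous f x) -> ex_RInt f a b.
Proof. intros H; apply (ex_RInt_continuous (V:=R_CompleteNormedModule)); auto. Qed.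
Lemma RInt_minusR (f g : R -> R) a b : ex_RInt f a b -> ex_RInt g a b ->
  RInt (fun x => f x - g x) a b = RInt f a b - RInt g a b.
Proof. intros; apply (RInt_minus f g a b); auto. Qed.
Lemma RInt_plusR (f g : R -> R) a b : ex_RInt f a b -> ex_RInt g a b ->
  RInt (fun x => f x + g x) a b = RInt f a b + RInt g a b.
Proof. intros; apply (RInt_plus f g a b); auto. Qed.
Lemma RInt_scalR (f : R -> R) c a b : ex_RInt f a b ->
  RInt (fun x => c * f x) a b = c * RInt f a b.
Proof. intros; apply (RInt_scal f a b c); auto. Qed.
Lemma RInt_constR (c a b : R) : RInt (fun _ => c) a b = (b - a) * c.
Proof. rewrite RInt_const. reflexivity. Qed.
Lemma RInt_oppR (f : R -> R) a b : ex_RInt f a b ->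
  RInt (fun x => - f x) a b = - RInt f a b.
Proof. intros; apply (RInt_opp f a b); auto. Qed.

Lemma RInt_ChaslesR (f : R -> R) a b c : ex_RInt f a b -> ex_RInt f b c ->
  RInt f a b + RInt f b c = RInt f a c.
Proof. intros; apply (RInt_Chasles f a b c); auto. Qed.

Lemma RInt_abs_le (f g : R -> R) L : 0 <= L -> ex_RInt f 0 L -> ex_RInt g 0 L ->
  (forall x, 0 <= x <= L -> Rabs (f x) <= g x) -> Rabs (RInt f 0 L) <= RInt g 0 L.
Proof.
  intros HL Hf Hg H. eapply Rle_trans. apply abs_RInt_le; auto.
  apply RInt_le; auto. apply ex_RInt_norm; auto.
  intros; apply H; lra.
Qed.

Lemma RInt_le0 (f g : R -> R) L : 0 <= L -> ex_RInt f 0 L -> ex_RInt g 0 L ->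
  (forall x, 0 <= x <= L -> f x <= g x) -> RInt f 0 L <= RInt g 0 L.
Proof. intros; apply RInt_le; auto; intros; apply H2; lra. Qed.

Lemma RInt_ext0 (f g : R -> R) L : 0 <= L -> (forall x, 0 <= x <= L -> f x = g x) -> RInt f 0 L = RInt g 0 L.
Proof. intros; apply RInt_ext; intros x Hx; rewrite Rmin_left, Rmax_right in Hx by lra; apply H0; lra. Qed.

Lemma Derive_per L (f : R -> R) : periodic L f -> periodic L (Derive f).
Proof.
  unfold periodic, Derive. intros H x. f_equal. apply Lim_ext. intros h.
  replace (x + L + h) with ((x + h) + L) by ring. now rewrite !H.
Qed.

Lemma deriv0_const (P : R -> R) : (forall x, is_derive P x 0) -> forall a b, P a = P b.
Proof.
  intros H a b.
  destruct (MVT_gen P a b (fun _ => 0)) as [c [_ Hc]].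
  - intros; apply H.
  - intros; apply continuity_pt_filterlim. eapply deriv_cont. apply H.
  - lra.
Qed.

Lemma per_shift L (h : R -> R) : (forall x, continuous h x) -> periodic L h ->
  forall a, @eq R (RInt h a (a + L)) (RInt h 0 L).
Proof.
  intros Hc Hp.
  set (P := fun a => RInt h 0 (a + L) - RInt h 0 a).
  assert (HP : forall a, @eq R (RInt h a (a + L)) (P a)).
  { intros a. unfold P. rewrite <- (RInt_ChaslesR h 0 a (a+L)) by (apply exR; auto).
    unfold Rminus. rewrite (Rplus_comm (RInt h 0 a)), Rplus_assoc, Rplus_opp_r, Rplus_0_r. reflexivity. }
  assert (HD : forall b, is_derive (RInt h 0) b (h b)).
  { intros b. apply (is_derive_RInt h (RInt h 0) 0 b); auto.
    apply filter_forall. intros; apply (RInt_correct (V:=R_CompleteNormedModule)), exR; auto. }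
  intros a. rewrite !HP. rewrite (deriv0_const P) with (b := 0).
  unfold P. rewrite Rplus_0_l. rewrite RInt_point. simpl. unfold zero; simpl. ring.
  intros x.
  assert (E : 1 * h (x + L) - h x = 0) by (rewrite Hp; ring).
  assert (H : is_derive P x (1 * h (x + L) - h x)).
  { apply (is_derive_minus (fun x => RInt h 0 (x + L)) (RInt h 0)).
    2: apply HD.
    apply (is_derive_comp (RInt h 0) (fun x => x + L)). apply HD.
    auto_derive; auto. }
  rewrite E in H. exact H.
Qed.

Definition Cv (L : R) (a b : R -> R) (z : R) := RInt (fun y => a y * b (z - y)) 0 L.

Lemma conv_Cv L (K f : R -> R) z : conv L K f z = Cv L f K z.
Proof. unfold conv, Cv. apply RInt_ext. intros; apply Rmult_comm. Qed.

Lemma RInt_refl (f : R -> R) z a b : (forall x, continuous f x) ->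
  RInt (fun y => f (z - y)) a b = RInt f (z - a) (z - b) * (-1).
Proof.
  intros Hf.
  assert (E := RInt_comp_lin f (-1) z a b (exR _ _ _ Hf)).
  replace (-1 * a + z) with (z - a) in E by ring.
  replace (-1 * b + z) with (z - b) in E by ring.
  rewrite <- E.
  rewrite (RInt_ext (fun y => scal (-1) (f (-1*y+z))) (fun y => -1 * f (z - y))).
  rewrite RInt_scalR. apply eqR; ring.
  apply exR. intros; cont.
  intros; unfold scal; simpl; unfold mult; simpl. f_equal. f_equal. ring.
Qed.

Lemma RInt_swapR (f : R -> R) a b : ex_RInt f a b -> RInt f b a = - RInt f a b.
Proof. intros H. rewrite <- (opp_RInt_swap f a b H). reflexivity. Qed.

Lemma Cv_swap L (a b : R -> R) z : (forall x, continuous a x) -> (forall x, continuous b x) ->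
  periodic L a -> periodic L b -> Cv L a b z = Cv L b a z.
Proof.
  intros Ha Hb Pa Pb. unfold Cv.
  set (f := fun w => b w * a (z - w)).
  assert (Hf : forall x, continuous f x) by (intros; unfold f; cont).
  assert (Pf : periodic L f).
  { intros w; unfold f. rewrite Pb. f_equal. rewrite <- (Pa (z - (w + L))). f_equal; ring. }
  rewrite (RInt_ext (fun y => a y * b (z - y)) (fun y => f (z - y))).
  2: { intros; unfold f. replace (z - (z - x)) with x by ring. apply Rmult_comm. }
  rewrite RInt_refl by auto. replace (z - 0) with z by ring.
  rewrite RInt_swapR by (apply exR; auto).
  rewrite <- (per_shift L f Hf Pf (z - L)). replace (z - L + L) with z by ring.
  apply eqR; ring.
Qed.

Lemma Cv_per L (a b : R -> R) : periodic L b -> periodic L (Cv L a b).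
Proof.
  intros Pb z. unfold Cv. apply RInt_ext. intros x _.
  replace (z + L - x) with ((z - x) + L) by ring. now rewrite Pb.
Qed.

Lemma Cv_deriv L (a b : R -> R) z : (forall x, continuous a x) -> (forall x, ex_derive b x) ->
  (forall x, continuous (Derive b) x) -> is_derive (Cv L a b) z (Cv L a (Derive b) z).
Proof.
  intros Ha Hb Hdb. unfold Cv.
  assert (HD : forall t u, is_derive (fun u => a t * b (u - t)) u (a t * Derive b (u - t))).
  { intros t u. auto_derive. apply Hb. rewrite Rmult_1_l. reflexivity. }
  assert (E : forall z, RInt (fun t => Derive (fun u => a t * b (u - t)) z) 0 L
                    = RInt (fun y => a y * Derive b (z - y)) 0 L).
  { intros; apply RInt_ext; intros; apply is_derive_unique, HD. }
  rewrite <- E.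
  apply (is_derive_RInt_param (fun u t => a t * b (u - t))).
  - apply filter_forall. intros; eexists; apply HD.
  - intros t _. apply continuity_2d_pt_filterlim.
    apply (filterlim_ext (fun p : R * R => a (snd p) * Derive b (fst p - snd p))).
    { intros p. symmetry. apply is_derive_unique, HD. }
    replace (Derive (fun z0 : R => a t * b (z0 - t)) z) with (a t * Derive b (z - t)) by (symmetry; apply is_derive_unique, HD).
    apply (continuous_mult (fun p : R * R => a (snd p)) (fun p : R * R => Derive b (fst p - snd p))).
    + apply (continuous_comp (@snd R R) a). apply continuous_snd. apply Ha.
    + apply (continuous_comp (fun p : R * R => fst p - snd p) (Derive b)).
      apply (continuous_minus (@fst R R) (@snd R R)). apply continuous_fst. apply continuous_snd.
      apply Hdb.
  - assert (Hbc : forall x, continuous b x) by (intros; eapply deriv_cont; apply Derive_correct; apply Hb).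
    apply filter_forall. intros; apply exR. intros; cont.
Qed.

Lemma int_deriv_per L (g dg : R -> R) : periodic L g -> (forall x, is_derive g x (dg x)) ->
  (forall x, continuous dg x) -> RInt dg 0 L = 0.
Proof.
  intros Hp Hd Hc.
  assert (H : is_RInt dg 0 L (minus (g L) (g 0))) by (apply (is_RInt_derive (V:=R_CompleteNormedModule)); auto).
  replace (minus (g L) (g 0)) with 0 in H.
  now apply (is_RInt_unique (V:=R_CompleteNormedModule)).
  unfold minus, plus, opp; simpl. rewrite <- (Rplus_0_l L) at 1. rewrite Hp. ring.
Qed.

Lemma bound_cont (g : R -> R) a b : a <= b -> (forall x, a <= x <= b -> continuous g x) ->
  exists B, 0 <= B /\ forall x, a <= x <= b -> Rabs (g x) <= B.
Proof.
  intros Hab Hc.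
  destruct (continuity_ab_maj (fun x => Rabs (g x)) a b Hab) as [M [HM _]].
  { intros; apply continuity_pt_filterlim. apply cR_abs. auto. }
  exists (Rabs (g M)). split. apply Rabs_pos. auto.
Qed.

Lemma int0_pos L (g : R -> R) : 0 < L -> (forall x, continuous g x) -> (forall x, 0 <= x <= L -> 0 <= g x) ->
  RInt g 0 L = 0 -> forall x, 0 <= x <= L -> g x = 0.
Proof.
  intros HL Hc Hpos Hint x0 Hx0.
  destruct (Req_dec (g x0) 0) as [|Hne]; auto. exfalso.
  assert (Hg0 : 0 < g x0) by (destruct (Hpos x0 Hx0); auto; congruence).
  destruct (cont_eps g x0 (Hc x0) (g x0 / 2)) as [d [Hd Hy]]. lra.
  set (c := Rmax 0 (x0 - d/2)). set (e := Rmin L (x0 + d/2)).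
  assert (Hce : c < e).
  { unfold c, e. apply Rmax_case; apply Rmin_case; lra. }
  assert (Hc0 : 0 <= c) by apply Rmax_l.
  assert (HeL : e <= L) by apply Rmin_l.
  assert (Hc1 : x0 - d/2 <= c) by apply Rmax_r.
  assert (He1 : e <= x0 + d/2) by apply Rmin_r.
  assert (Hmid : 0 < RInt g c e).
  { apply RInt_gt_0; auto. intros x Hx.
    assert (Rabs (x - x0) < d) by (apply Rabs_def1; lra).
    specialize (Hy x H). apply Rabs_def2 in Hy. lra. }
  assert (H1 : 0 <= RInt g 0 c).
  { apply RInt_ge_0; auto. apply exR; auto. intros; apply Hpos; lra. }
  assert (H2 : 0 <= RInt g e L).
  { apply RInt_ge_0; auto. apply exR; auto. intros; apply Hpos; lra. }
  rewrite <- (RInt_ChaslesR g 0 c L), <- (RInt_ChaslesR g c e L) in Hint by (apply exR; auto).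
  lra.
Qed.

Lemma sumR_ext N f g : (forall i, (i < N)%nat -> f i = g i) -> sumR N f = sumR N g.
Proof. induction N; simpl; intros; auto. rewrite IHN by (intros; apply H; lia). rewrite H; auto. Qed.
Lemma sumR_le N f g : (forall i, (i < N)%nat -> f i <= g i) -> sumR N f <= sumR N g.
Proof. induction N; simpl; intros. lra. specialize (IHN (fun i Hi => H i ltac:(lia))). specialize (H N ltac:(lia)). lra. Qed.
Lemma sumR_abs N f : Rabs (sumR N f) <= sumR N (fun i => Rabs (f i)).
Proof. induction N; simpl. rewrite Rabs_R0; lra. eapply Rle_trans. apply Rabs_triang. lra. Qed.
Lemma sumR_pos N f : (1 <= N)%nat -> (forall i, (i < N)%nat -> 0 < f i) -> 0 < sumR N f.
Proof.
  induction N; simpl; intros. lia.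
  destruct N. simpl. specialize (H0 0%nat ltac:(lia)). lra.
  specialize (IHN ltac:(lia) (fun i Hi => H0 i ltac:(lia))). specialize (H0 (S N) ltac:(lia)). lra.
Qed.
Lemma sumR_deriv N (f : nat -> R -> R) (df : nat -> R) x : (forall j, (j < N)%nat -> is_derive (f j) x (df j)) ->
  is_derive (fun z => sumR N (fun j => f j z)) x (sumR N df).
Proof.
  induction N; simpl; intros H.
  - apply is_derive_Reals, derivable_pt_lim_const.
  - apply (is_derive_plus (fun z => sumR N (fun j => f j z)) (f N)).
    apply IHN; intros; apply H; lia. apply H; lia.
Qed.
Lemma sumR_cont N (f : nat -> R -> R) x : (forall j, (j < N)%nat -> continuous (f j) x) ->
  continuous (fun z => sumR N (fun j => f j z)) x.
Proof.
  induction N; simpl; intros H. apply cR_const.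
  apply cR_plus. apply IHN; intros; apply H; lia. apply H; lia.
Qed.
Lemma sumR_per L N (f : nat -> R -> R) : (forall j, (j < N)%nat -> periodic L (f j)) ->
  periodic L (fun z => sumR N (fun j => f j z)).
Proof. intros H z. apply sumR_ext. intros; apply H; auto. Qed.
Lemma sumR_plus N f g : sumR N (fun i => f i + g i) = sumR N f + sumR N g.
Proof. induction N; simpl. ring. rewrite IHN. ring. Qed.


Lemma lim0_eps (F : R -> R) t : filterlim F (locally' t) (locally 0) ->
  forall eps, 0 < eps -> exists d, 0 < d /\ forall s, s <> t -> Rabs (s - t) < d -> Rabs (F s) < eps.
Proof.
  intros H eps He. destruct (proj1 (filterlim_locally F 0) H (mkposreal eps He)) as [d Hd].
  exists d; split; [apply cond_pos|]. intros s Hs Hd'.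
  specialize (Hd s Hd' Hs). unfold ball in Hd; simpl in Hd.
  unfold AbsRing_ball, abs, minus, plus, opp in Hd; simpl in Hd.
  rewrite Ropp_0, Rplus_0_r in Hd. exact Hd.
Qed.

Definition remhyp (G G' : R -> R) (c : R) :=
  forall a b, Rabs (G a - G b - G' b * (a - b)) <= c * (Rabs a + Rabs b) * (a - b)^2.

Lemma rem_bound G G' c a0 a1 BU BG eta : 0 <= c -> remhyp G G' c ->
  Rabs a0 <= BU -> Rabs (G' a0) <= BG -> Rabs (a1 - a0) < eta -> eta <= 1 ->
  Rabs (G a1 - G a0) <= (BG + c * (2 * BU + 1)) * eta.
Proof.
  intros Hc HR H0 HG Hd He. specialize (HR a1 a0).
  assert (Ha1 : Rabs a1 <= BU + 1).
  { replace a1 with (a0 + (a1 - a0)) by ring. eapply Rle_trans. apply Rabs_triang. lra. }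
  assert (Hsq : (a1 - a0)^2 <= eta).
  { rewrite <- pow2_abs. pose proof (Rabs_pos (a1 - a0)). nra. }
  assert (H1 : c * (Rabs a1 + Rabs a0) * (a1 - a0)^2 <= c * (2*BU+1) * eta).
  { apply Rmult_le_compat. apply Rmult_le_pos; auto. pose proof (Rabs_pos a1); pose proof (Rabs_pos a0); lra.
    apply pow2_ge_0. apply Rmult_le_compat_l; auto. lra. auto. }
  assert (H2 : Rabs (G' a0 * (a1 - a0)) <= BG * eta).
  { rewrite Rabs_mult. apply Rmult_le_compat; auto; try apply Rabs_pos. lra. }
  replace (G a1 - G a0) with ((G a1 - G a0 - G' a0 * (a1 - a0)) + G' a0 * (a1 - a0)) by ring.
  eapply Rle_trans. apply Rabs_triang. lra.
Qed.

Lemma rem_bound2 G G' c a0 a1 BU BG eta h r al : 0 <= c -> remhyp G G' c ->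
  Rabs a0 <= BU -> Rabs (G' a0) <= BG -> Rabs (a1 - a0) < eta -> eta <= 1 -> h <> 0 -> 0 < al ->
  Rabs ((G a1 - G a0) / h - G' a0 * r) <=
    (BG + c * (2 * BU + 1)) * al / 2 + (BG + c * (2 * BU + 1)) / (2 * al) * ((a1 - a0) / h - r)^2
    + c * (2 * BU + 1) * eta * Rabs r.
Proof.
  intros Hc HR H0 HG Hd He Hh Hal. specialize (HR a1 a0).
  set (k := c * (2 * BU + 1)).
  assert (Hk : 0 <= k) by (unfold k; apply Rmult_le_pos; [auto | pose proof (Rabs_pos a0); lra]).
  set (e := (a1 - a0) / h - r).
  set (Rm := G a1 - G a0 - G' a0 * (a1 - a0)).
  assert (Ha1 : Rabs a1 <= BU + 1).
  { replace a1 with (a0 + (a1 - a0)) by ring. eapply Rle_trans. apply Rabs_triang. lra. }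
  replace ((G a1 - G a0) / h - G' a0 * r) with (G' a0 * e + Rm / h) by (unfold e, Rm; field; auto).
  assert (HRm : Rabs (Rm / h) <= k * eta * (Rabs e + Rabs r)).
  { unfold Rdiv. rewrite Rabs_mult, Rabs_inv.
    assert (Hq : (a1 - a0) / h = e + r) by (unfold e; ring).
    assert (Hh' : 0 < Rabs h) by (apply Rabs_pos_lt; auto).
    assert (Rabs (a1 - a0) = Rabs h * Rabs (e + r)).
    { rewrite <- Rabs_mult. f_equal. rewrite <- Hq. field; auto. }
    apply (Rmult_le_reg_r (Rabs h)); auto.
    rewrite Rmult_assoc, Rinv_l, Rmult_1_r by lra.
    eapply Rle_trans. apply HR.
    rewrite <- pow2_abs. rewrite H.
    assert (Rabs (e + r) <= Rabs e + Rabs r) by apply Rabs_triang.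
    assert (c * (Rabs a1 + Rabs a0) <= k) by (unfold k; apply Rmult_le_compat_l; auto; lra).
    assert (0 <= c * (Rabs a1 + Rabs a0)) by (apply Rmult_le_pos; auto; pose proof (Rabs_pos a1); pose proof (Rabs_pos a0); lra).
    assert (Rabs h * Rabs (e + r) < eta) by (rewrite <- H; auto).
    pose proof (Rabs_pos (e + r)).
    replace (c * (Rabs a1 + Rabs a0) * (Rabs h * Rabs (e + r)) ^ 2) with
      ((c * (Rabs a1 + Rabs a0)) * (Rabs h * Rabs (e + r)) * Rabs (e + r) * Rabs h) by ring.
    apply Rmult_le_compat_r. lra.
    apply Rmult_le_compat. apply Rmult_le_pos; auto. apply Rmult_le_pos; lra. lra.
    apply Rmult_le_compat; try lra. apply Rmult_le_pos; lra. lra. }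
  assert (HGe : Rabs (G' a0 * e) <= BG * Rabs e).
  { rewrite Rabs_mult. apply Rmult_le_compat_r. apply Rabs_pos. auto. }
  assert (Hee : Rabs e <= al / 2 + / (2 * al) * e^2).
  { rewrite <- (pow2_abs e). pose proof (Rabs_pos e).
    apply (Rmult_le_reg_l (2 * al)). lra.
    replace (2 * al * (al / 2 + / (2 * al) * Rabs e ^ 2)) with (al * al + Rabs e ^ 2) by (field; lra).
    pose proof (pow2_ge_0 (al - Rabs e)). nra. }
  assert (HBG : 0 <= BG) by (eapply Rle_trans; [apply Rabs_pos | apply HG]).
  eapply Rle_trans. apply Rabs_triang.
  assert (Rabs (G' a0 * e) + Rabs (Rm / h) <= (BG + k) * Rabs e + k * eta * Rabs r).
  { assert (k * eta * Rabs e <= k * Rabs e).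
    { rewrite Rmult_assoc. apply Rmult_le_compat_l; auto. pose proof (Rabs_pos e). nra. }
    lra. }
  eapply Rle_trans. apply H.
  apply Rplus_le_compat_r.
  replace ((BG + k) * al / 2 + (BG + k) / (2 * al) * e ^ 2) with ((BG + k) * (al / 2 + / (2 * al) * e ^ 2)) by (field; lra).
  apply Rmult_le_compat_l. lra. auto.
Qed.

Lemma frac_le1 a b : 0 < b -> a <= b -> a / b <= 1.
Proof. intros. apply (Rmult_le_reg_r b); auto. unfold Rdiv. rewrite Rmult_assoc, Rinv_l by lra. lra. Qed.

Lemma RInt_divR (f : R -> R) c a b : ex_RInt f a b -> RInt (fun x => f x / c) a b = RInt f a b / c.
Proof.
  intros H. unfold Rdiv. rewrite (RInt_ext (fun x => f x * / c) (fun x => / c * f x)) by (intros; apply Rmult_comm).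
  rewrite RInt_scalR by auto. apply Rmult_comm.
Qed.

Lemma time_cont (L : R) (U : R -> R -> R) (G G' : R -> R) (c t : R) (P : R -> Prop) :
  0 <= L -> 0 <= c ->
  (forall x, continuous G x) -> (forall x, continuous G' x) -> remhyp G G' c ->
  (forall s, P s -> forall x, continuous (U s) x) -> P t ->
  (forall eps, 0 < eps -> exists d, 0 < d /\ forall s, P s -> Rabs (s - t) < d ->
      forall x, Rabs (U s x - U t x) < eps) ->
  forall eps, 0 < eps -> exists d, 0 < d /\ forall s, P s -> Rabs (s - t) < d ->
    Rabs (RInt (fun x => G (U s x)) 0 L - RInt (fun x => G (U t x)) 0 L) < eps.
Proof.
  intros HL Hc HGc HG'c HR HUc Pt Hunif eps Heps.
  assert (HUt : forall x, continuous (U t) x) by auto.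
  destruct (bound_cont (U t) 0 L) as [BU [HBU0 HBU]]; auto.
  destruct (bound_cont (fun x => G' (U t x)) 0 L) as [BG [HBG0 HBG]]; auto. intros; cont.
  set (K := BG + c * (2 * BU + 1)).
  assert (HK : 0 <= K) by (unfold K; assert (0 <= c * (2*BU+1)) by (apply Rmult_le_pos; lra); lra).
  set (eta := Rmin 1 (eps / ((K+1)*(L+1)))).
  assert (Heta : 0 < eta) by (apply Rmin_pos; [lra | apply Rdiv_lt_0_compat; nra]).
  assert (Heta1 : eta <= 1) by apply Rmin_l.
  assert (Heta2 : eta <= eps / ((K+1)*(L+1))) by apply Rmin_r.
  destruct (Hunif eta Heta) as [d [Hd HdU]]. exists d. split; auto. intros s Ps Hs.
  assert (HUs : forall x, continuous (U s) x) by auto.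
  rewrite <- RInt_minusR by (apply exR; intros; cont).
  eapply Rle_lt_trans. apply (RInt_abs_le _ (fun _ => K * eta)); auto.
  apply exR; intros; cont. apply exR; intros; cont.
  intros x Hx. unfold K. eapply rem_bound; eauto.
  rewrite RInt_constR.
  assert (eta * ((K+1)*(L+1)) <= eps).
  { apply (Rmult_le_compat_r ((K+1)*(L+1))) in Heta2; [|nra].
    unfold Rdiv in Heta2. rewrite Rmult_assoc, Rinv_l, Rmult_1_r in Heta2 by nra. auto. }
  nra.
Qed.

Lemma time_deriv (L : R) (U : R -> R -> R) (r G G' : R -> R) (c t : R) (P : R -> Prop) :
  0 <= L -> 0 <= c ->
  (forall x, continuous G x) -> (forall x, continuous G' x) -> remhyp G G' c ->
  (forall s, P s -> forall x, continuous (U s) x) -> (forall x, continuous r x) ->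
  (exists d, 0 < d /\ forall s, Rabs (s - t) < d -> P s) ->
  (forall eps, 0 < eps -> exists d, 0 < d /\ forall s, P s -> Rabs (s - t) < d ->
      forall x, Rabs (U s x - U t x) < eps) ->
  filterlim (fun s => RInt (fun x => ((U s x - U t x) / (s - t) - r x) ^ 2) 0 L)
    (locally' t) (locally 0) ->
  is_derive (fun s => RInt (fun x => G (U s x)) 0 L) t (RInt (fun x => G' (U t x) * r x) 0 L).
Proof.
  intros HL Hc HGc HG'c HR HUc Hrc [d3 [Hd3 HP]] Hunif Hlim.
  assert (Pt : P t) by (apply HP; rewrite Rminus_diag, Rabs_R0; auto).
  assert (HUt : forall x, continuous (U t) x) by auto.
  destruct (bound_cont (U t) 0 L) as [BU [HBU0 HBU]]; auto.
  destruct (bound_cont (fun x => G' (U t x)) 0 L) as [BG [HBG0 HBG]]; auto. intros; cont.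
  set (Ir := RInt (fun x => Rabs (r x)) 0 L).
  assert (HIr : 0 <= Ir) by (apply RInt_ge_0; auto; [apply exR; intros; cont | intros; apply Rabs_pos]).
  set (k := c * (2 * BU + 1)).
  assert (Hk : 0 <= k) by (unfold k; apply Rmult_le_pos; lra).
  set (A := BG + k).
  assert (HA : 0 <= A) by (unfold A; lra).
  apply is_derive_Reals. intros eps Heps.
  set (al := eps / (2 * (A+1) * (L+1))).
  assert (Hal : 0 < al) by (apply Rdiv_lt_0_compat; nra).
  set (Et := al * eps / (2 * (A+1))).
  assert (HEt : 0 < Et) by (apply Rdiv_lt_0_compat; nra).
  set (eta := Rmin 1 (eps / (4 * (k * Ir + 1)))).
  assert (Heta : 0 < eta) by (apply Rmin_pos; [lra | apply Rdiv_lt_0_compat; nra]).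
  assert (Heta1 : eta <= 1) by apply Rmin_l.
  assert (Heta2 : eta <= eps / (4 * (k * Ir + 1))) by apply Rmin_r.
  destruct (lim0_eps _ t Hlim Et HEt) as [d1 [Hd1 HE]].
  destruct (Hunif eta Heta) as [d2 [Hd2 HdU]].
  assert (Hdp : 0 < Rmin d1 (Rmin d2 d3)) by (repeat apply Rmin_pos; auto).
  exists (mkposreal _ Hdp). intros h Hh0 Hh. simpl in Hh.
  set (s := t + h).
  assert (Hst : s - t = h) by (unfold s; ring).
  assert (Hs1 : Rabs (s - t) < d1) by (rewrite Hst; eapply Rlt_le_trans; [apply Hh | apply Rmin_l]).
  assert (Hs2 : Rabs (s - t) < d2) by (rewrite Hst; eapply Rlt_le_trans; [apply Hh | eapply Rle_trans; [apply Rmin_r | apply Rmin_l]]).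
  assert (Hs3 : Rabs (s - t) < d3) by (rewrite Hst; eapply Rlt_le_trans; [apply Hh | eapply Rle_trans; [apply Rmin_r | apply Rmin_r]]).
  assert (Ps : P s) by auto.
  assert (HUs : forall x, continuous (U s) x) by auto.
  assert (Hsne : s <> t) by (intro Heq; apply Hh0; lra).
  specialize (HE s Hsne Hs1).
  set (E := RInt (fun x => ((U s x - U t x) / (s - t) - r x) ^ 2) 0 L) in HE.
  assert (Eq : (RInt (fun x => G (U s x)) 0 L - RInt (fun x => G (U t x)) 0 L) / h
               - RInt (fun x => G' (U t x) * r x) 0 L
             = RInt (fun x => (G (U s x) - G (U t x)) / (s - t) - G' (U t x) * r x) 0 L).
  { rewrite RInt_minusR by (apply exR; intros; cont).
    rewrite RInt_divR by (apply exR; intros; cont).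
    rewrite RInt_minusR by (apply exR; intros; cont).
    rewrite Hst. reflexivity. }
  rewrite Eq. clear Eq.
  eapply Rle_lt_trans.
  apply (RInt_abs_le _ (fun x => (A * al / 2 + A / (2 * al) * ((U s x - U t x) / (s - t) - r x) ^ 2)
                                  + k * eta * Rabs (r x))); auto.
  apply exR; intros; cont. apply exR; intros; cont.
  { intros x Hx. unfold A, k. apply rem_bound2; auto. rewrite Hst; auto. }
  rewrite RInt_plusR by (apply exR; intros; cont).
  rewrite RInt_plusR by (apply exR; intros; cont).
  rewrite RInt_constR, RInt_scalR, RInt_scalR by (apply exR; intros; cont).
  fold E. fold Ir.
  assert (HE' : E < Et) by (eapply Rle_lt_trans; [apply Rle_abs | apply HE]).
  assert (T1 : (L - 0) * (A * al / 2) <= eps / 4).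
  { replace ((L - 0) * (A * al / 2)) with (eps / 4 * ((L * A) / ((A+1)*(L+1)))) by (unfold al; field; lra).
    rewrite <- (Rmult_1_r (eps/4)) at 2. apply Rmult_le_compat_l. lra. apply frac_le1; nra. }
  assert (T2 : A / (2 * al) * E <= eps / 4).
  { apply Rle_trans with (A / (2 * al) * Et).
    apply Rmult_le_compat_l. apply Rdiv_le_0_compat; lra. lra.
    replace (A / (2 * al) * Et) with (eps / 4 * (A / (A+1))) by (unfold Et; field; lra).
    rewrite <- (Rmult_1_r (eps/4)) at 2. apply Rmult_le_compat_l. lra. apply frac_le1; lra. }
  assert (T3 : k * eta * Ir <= eps / 4).
  { apply Rle_trans with (k * Ir * (eps / (4 * (k * Ir + 1)))).
    replace (k * eta * Ir) with (k * Ir * eta) by ring. apply Rmult_le_compat_l; auto. nra.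
    replace (k * Ir * (eps / (4 * (k * Ir + 1)))) with (eps / 4 * (k * Ir / (k * Ir + 1))) by (field; nra).
    rewrite <- (Rmult_1_r (eps/4)) at 2. apply Rmult_le_compat_l. lra. apply frac_le1; nra. }
  lra.
Qed.


Lemma is_derive_eq (f : R -> R) x (l l' : R) : is_derive f x l -> l = l' -> is_derive f x l'.
Proof. intros H <-; auto. Qed.

Lemma continuous_extR (f g : R -> R) x : (forall y, f y = g y) -> continuous f x -> continuous g x.
Proof. intros H Hc. apply (continuous_ext f g x); auto. Qed.

Lemma C2_facts L f : C2per L f ->
  periodic L f /\ periodic L (Derive f) /\ periodic L (Derive (Derive f)) /\
  (forall x, is_derive f x (Derive f x)) /\ (forall x, is_derive (Derive f) x (Derive (Derive f) x)) /\
  (forall x, continuous f x) /\ (forall x, continuous (Derive f) x) /\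
  (forall x, continuous (Derive (Derive f)) x).
Proof.
  intros [Hp Hd].
  assert (D1 : forall x, is_derive f x (Derive f x)) by (intros; apply Derive_correct, Hd).
  assert (D2 : forall x, is_derive (Derive f) x (Derive (Derive f) x)) by (intros; apply Derive_correct, Hd).
  refine (conj Hp (conj _ (conj _ (conj D1 (conj D2 (conj _ (conj _ _))))))).
  - apply Derive_per; auto.
  - apply Derive_per, Derive_per; auto.
  - intros; eapply deriv_cont; apply D1.
  - intros; eapply deriv_cont; apply D2.
  - intros x. destruct (Hd x) as [_ [_ H]]. exact H.
Qed.

Definition Vf L N h K (u : nat -> R -> R -> R) (i : nat) s z :=
  sumR N (fun j => h i j * Cv L K (Derive (u j s)) z).
Definition V2f L N h K (u : nat -> R -> R -> R) (i : nat) s z :=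
  sumR N (fun j => h i j * Cv L (Derive (u j s)) (Derive K) z).


Lemma conv_facts L K f :
  periodic L K -> (forall x, ex_derive K x) -> (forall x, ex_derive (Derive K) x) -> C2per L f ->
  (forall z, is_derive (conv L K f) z (Cv L K (Derive f) z)) /\
  (forall z, is_derive (Cv L K (Derive f)) z (Cv L (Derive f) (Derive K) z)) /\
  (forall z, continuous (Cv L (Derive f) (Derive K)) z) /\
  periodic L (Cv L K (Derive f)).
Proof.
  intros PK HK1 HK2 Hf.
  destruct (C2_facts L f Hf) as [P0 [P1 [P2 [D1 [D2 [C0 [C1 C2]]]]]]].
  assert (CK : forall x, continuous K x) by (intros; eapply deriv_cont; apply Derive_correct, HK1).
  assert (CK1 : forall x, continuous (Derive K) x) by (intros; eapply deriv_cont; apply Derive_correct, HK2).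
  assert (PK1 : periodic L (Derive K)) by (apply Derive_per; auto).
  assert (Hf1 : forall x, ex_derive f x) by (intros; eexists; apply D1).
  assert (Hf2 : forall x, ex_derive (Derive f) x) by (intros; eexists; apply D2).
  split; [|split; [|split]].
  - intros z. apply (is_derive_ext (Cv L K f)).
    { intros y. rewrite conv_Cv. apply Cv_swap; auto. }
    apply Cv_deriv; auto.
  - intros z. apply (is_derive_ext (Cv L (Derive f) K)).
    { intros y. apply Cv_swap; auto. }
    apply Cv_deriv; auto.
  - intros z. apply (continuous_extR (Cv L (Derive K) (Derive f))).
    { intros y. apply Cv_swap; auto. }
    eapply deriv_cont. apply Cv_deriv; auto.
  - apply Cv_per; auto.
Qed.

Lemma Cv_bound L (a b : R -> R) z B M : 0 <= L -> (forall x, continuous a x) -> (forall x, continuous b x) ->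
  (forall y, 0 <= y <= L -> Rabs (a y) <= B) -> (forall y, Rabs (b y) <= M) ->
  Rabs (Cv L a b z) <= L * (B * M).
Proof.
  intros HL Ca Cb HB HM. unfold Cv.
  replace (L * (B * M)) with ((L - 0) * (B * M)) by ring. rewrite <- RInt_constR.
  apply RInt_abs_le; auto. apply exR; intros; cont. apply exR; intros; cont.
  intros y Hy. rewrite Rabs_mult. apply Rmult_le_compat; try apply Rabs_pos; auto.
Qed.

Lemma V_facts L N h K (u : nat -> R -> R -> R) i s :
  periodic L K -> (forall x, ex_derive K x) -> (forall x, ex_derive (Derive K) x) ->
  (forall j, (j < N)%nat -> C2per L (u j s)) ->
  (forall z, is_derive (fun z => sumR N (fun j => h i j * conv L K (u j s) z)) z (Vf L N h K u i s z)) /\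
  (forall z, is_derive (Vf L N h K u i s) z (V2f L N h K u i s z)) /\
  (forall z, continuous (V2f L N h K u i s) z) /\
  periodic L (Vf L N h K u i s).
Proof.
  intros PK HK1 HK2 Hs.
  assert (CF : forall j, (j < N)%nat -> _) by (intros j Hj; exact (conv_facts L K (u j s) PK HK1 HK2 (Hs j Hj))).
  split; [|split; [|split]].
  - intros z. unfold Vf. apply (sumR_deriv N (fun j z => h i j * conv L K (u j s) z)).
    intros j Hj. destruct (CF j Hj) as [H1 _].
    eapply is_derive_eq. apply (is_derive_scal (conv L K (u j s))). apply H1. reflexivity.
  - intros z. unfold Vf, V2f. apply (sumR_deriv N (fun j z => h i j * Cv L K (Derive (u j s)) z)).
    intros j Hj. destruct (CF j Hj) as [_ [H2 _]].
    eapply is_derive_eq. apply (is_derive_scal (Cv L K (Derive (u j s)))). apply H2. reflexivity.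
  - intros z. unfold V2f. apply (sumR_cont N (fun j z => h i j * Cv L (Derive (u j s)) (Derive K) z)).
    intros j Hj. destruct (CF j Hj) as [_ [_ [H3 _]]]. cont.
  - unfold Vf. apply (sumR_per L N (fun j z => h i j * Cv L K (Derive (u j s)) z)).
    intros j Hj z. destruct (CF j Hj) as [_ [_ [_ H4]]]. now rewrite H4.
Qed.

Lemma V2_bound L N h K (u : nat -> R -> R -> R) i s M (B : nat -> R) :
  0 <= L -> periodic L K -> (forall x, ex_derive K x) -> (forall x, ex_derive (Derive K) x) ->
  (forall x, Rabs (Derive K x) <= M) ->
  (forall j, (j < N)%nat -> C2per L (u j s)) ->
  (forall j, (j < N)%nat -> forall y, 0 <= y <= L -> Rabs (Derive (u j s) y) <= B j) ->
  forall z, Rabs (V2f L N h K u i s z) <= sumR N (fun j => Rabs (h i j) * (L * (B j * M))).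
Proof.
  intros HL PK HK1 HK2 HM Hs HB z. unfold V2f.
  eapply Rle_trans. apply sumR_abs. apply sumR_le. intros j Hj.
  destruct (C2_facts L _ (Hs j Hj)) as [_ [_ [_ [_ [_ [_ [C1 _]]]]]]].
  assert (CK1 : forall x, continuous (Derive K) x) by (intros; eapply deriv_cont; apply Derive_correct, HK2).
  rewrite Rabs_mult. apply Rmult_le_compat_l. apply Rabs_pos.
  apply Cv_bound; auto.
Qed.


Lemma dR_mult (f g : R -> R) x df dg : is_derive f x df -> is_derive g x dg ->
  is_derive (fun y => f y * g y) x (df * g x + f x * dg).
Proof. intros. apply (is_derive_mult f g); auto. intros; apply Rmult_comm. Qed.
Lemma dR_comp (f g : R -> R) x df dg : is_derive f (g x) df -> is_derive g x dg ->
  is_derive (fun y => f (g y)) x (dg * df).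
Proof. intros; apply (is_derive_comp f g); auto. Qed.

Lemma rhs_eq L N D h K (u : nat -> R -> R -> R) i s x :
  periodic L K -> (forall x, ex_derive K x) -> (forall x, ex_derive (Derive K) x) ->
  (forall j, (j < N)%nat -> C2per L (u j s)) -> (i < N)%nat ->
  rhs L N D h K u i s x = D i * Derive (Derive (u i s)) x -
     (Derive (u i s) x * Vf L N h K u i s x + u i s x * V2f L N h K u i s x).
Proof.
  intros PK HK1 HK2 Hs Hi.
  destruct (V_facts L N h K u i s PK HK1 HK2 Hs) as [W1 [W2 _]].
  destruct (C2_facts L _ (Hs i Hi)) as [_ [_ [_ [D1 _]]]].
  unfold rhs. f_equal. f_equal.
  rewrite (Derive_ext _ (fun y => u i s y * Vf L N h K u i s y)).
  2: { intros y. f_equal. apply is_derive_unique, W1. }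
  apply is_derive_unique. apply dR_mult; auto.
Qed.

Lemma rhs_cont L N D h K (u : nat -> R -> R -> R) i s :
  periodic L K -> (forall x, ex_derive K x) -> (forall x, ex_derive (Derive K) x) ->
  (forall j, (j < N)%nat -> C2per L (u j s)) -> (i < N)%nat ->
  forall x, continuous (rhs L N D h K u i s) x.
Proof.
  intros PK HK1 HK2 Hs Hi x.
  destruct (V_facts L N h K u i s PK HK1 HK2 Hs) as [W1 [W2 [W3 _]]].
  destruct (C2_facts L _ (Hs i Hi)) as [_ [_ [_ [D1 [D2 [C0 [C1 C2]]]]]]].
  assert (CV : forall z, continuous (Vf L N h K u i s) z) by (intros; eapply deriv_cont; apply W2).
  apply (continuous_extR (fun x => D i * Derive (Derive (u i s)) x -
     (Derive (u i s) x * Vf L N h K u i s x + u i s x * V2f L N h K u i s x))).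
  intros; symmetry; apply rhs_eq; auto.
  cont.
Qed.

Lemma mass_int L N D h K (u : nat -> R -> R -> R) i s :
  periodic L K -> (forall x, ex_derive K x) -> (forall x, ex_derive (Derive K) x) ->
  (forall j, (j < N)%nat -> C2per L (u j s)) -> (i < N)%nat ->
  RInt (fun x => 1 * rhs L N D h K u i s x) 0 L = 0.
Proof.
  intros PK HK1 HK2 Hs Hi.
  destruct (V_facts L N h K u i s PK HK1 HK2 Hs) as [W1 [W2 [W3 W4]]].
  destruct (C2_facts L _ (Hs i Hi)) as [P0 [P1 [P2 [D1 [D2 [C0 [C1 C2]]]]]]].
  assert (CV : forall z, continuous (Vf L N h K u i s) z) by (intros; eapply deriv_cont; apply W2).
  set (U := u i s) in *. set (V := Vf L N h K u i s) in *. set (V2 := V2f L N h K u i s) in *.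
  apply eqR.
  rewrite (RInt_ext _ (fun x => D i * Derive (Derive U) x - (Derive U x * V x + U x * V2 x))).
  2: { intros; rewrite Rmult_1_l; apply rhs_eq; auto. }
  rewrite RInt_minusR by (apply exR; intros; cont).
  rewrite RInt_scalR by (apply exR; intros; cont).
  rewrite (int_deriv_per L (Derive U)); auto.
  rewrite (int_deriv_per L (fun y => U y * V y) (fun x => Derive U x * V x + U x * V2 x)). ring.
  - intros y. rewrite P0, W4. reflexivity.
  - intros y. apply dR_mult; auto.
  - intros; cont.
Qed.

Lemma energy L N D h K (u : nat -> R -> R -> R) i s C :
  0 <= L -> periodic L K -> (forall x, ex_derive K x) -> (forall x, ex_derive (Derive K) x) ->
  (forall j, (j < N)%nat -> C2per L (u j s)) -> (i < N)%nat -> 0 < D i ->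
  (forall x, 0 <= x <= L -> Rabs (V2f L N h K u i s x) <= C) ->
  RInt (fun x => dFneg (u i s x) * rhs L N D h K u i s x) 0 L <= 2 * C * RInt (fun x => Fneg (u i s x)) 0 L.
Proof.
  intros HL PK HK1 HK2 Hs Hi HD HC.
  destruct (V_facts L N h K u i s PK HK1 HK2 Hs) as [W1 [W2 [W3 W4]]].
  destruct (C2_facts L _ (Hs i Hi)) as [P0 [P1 [P2 [D1 [D2 [C0 [C1 C2]]]]]]].
  assert (CV : forall z, continuous (Vf L N h K u i s) z) by (intros; eapply deriv_cont; apply W2).
  assert (CF := Fn_cont). assert (CdF := dFn_cont). assert (CddF := ddFn_cont).
  set (U := u i s) in *. set (V := Vf L N h K u i s) in *. set (V2 := V2f L N h K u i s) in *.
  set (U1 := Derive U) in *. set (U2 := Derive U1) in *.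
  set (g1 := fun y => dFneg (U y) * U1 y).
  set (dg1 := fun y => ddFneg (U y) * U1 y * U1 y + dFneg (U y) * U2 y).
  set (g2 := fun y => Fneg (U y) * V y).
  set (dg2 := fun y => dFneg (U y) * U1 y * V y + Fneg (U y) * V2 y).
  assert (I1 : RInt dg1 0 L = 0).
  { apply (int_deriv_per L g1).
    - intros y; unfold g1. rewrite P0, P1. reflexivity.
    - intros y. unfold g1, dg1. eapply is_derive_eq. apply dR_mult; auto.
      apply dR_comp. apply dFn_deriv. auto. cbv beta. ring.
    - intros; unfold dg1; cont. }
  assert (I2 : RInt dg2 0 L = 0).
  { apply (int_deriv_per L g2).
    - intros y; unfold g2. rewrite P0, W4. reflexivity.
    - intros y. unfold g2, dg2. eapply is_derive_eq. apply dR_mult; auto.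
      apply dR_comp. apply Fn_deriv. auto. cbv beta. ring.
    - intros; unfold dg2; cont. }
  rewrite (RInt_ext _ (fun x => D i * dg1 x - D i * (ddFneg (U x) * U1 x * U1 x) - dg2 x - 2 * (Fneg (U x) * V2 x))).
  2: { intros x _. rewrite rhs_eq; auto. fold U V V2 U1 U2. unfold dg1, dg2.
       pose proof (Fn_id (U x)). replace (dFneg (U x) * (D i * U2 x - (U1 x * V x + U x * V2 x)))
       with (D i * (dFneg (U x) * U2 x) - dFneg (U x) * U1 x * V x - (dFneg (U x) * U x) * V2 x) by ring.
       replace (dFneg (U x) * U x) with (3 * Fneg (U x)) by lra. apply eqR; ring. }
  assert (Cdg1 : forall x, continuous dg1 x) by (intros; unfold dg1; cont).
  assert (Cdg2 : forall x, continuous dg2 x) by (intros; unfold dg2; cont).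
  rewrite RInt_minusR by (apply exR; intros; cont).
  rewrite RInt_minusR by (apply exR; intros; cont).
  rewrite RInt_minusR by (apply exR; intros; cont).
  rewrite RInt_scalR by (apply exR; intros; cont).
  rewrite RInt_scalR by (apply exR; intros; cont).
  rewrite RInt_scalR by (apply exR; intros; cont).
  rewrite I1, I2.
  assert (J1 : 0 <= RInt (fun x => ddFneg (U x) * U1 x * U1 x) 0 L).
  { apply RInt_ge_0; auto. apply exR; intros; cont.
    intros x _. pose proof (ddFn_ge0 (U x)). rewrite Rmult_assoc. apply Rmult_le_pos; auto. nra. }
  assert (J2 : - RInt (fun x => Fneg (U x) * V2 x) 0 L <= C * RInt (fun x => Fneg (U x)) 0 L).
  { rewrite <- RInt_oppR by (apply exR; intros; cont).
    rewrite <- RInt_scalR by (apply exR; intros; cont).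
    apply RInt_le0; auto. apply exR; intros; cont. apply exR; intros; cont.
    intros x Hx. specialize (HC x Hx). pose proof (Fn_ge0 (U x)).
    apply Rabs_le_between in HC. nra. }
  nra.
Qed.


Lemma ball_R (x y e : R) : ball x e y <-> Rabs (y - x) < e.
Proof. unfold ball; simpl; unfold AbsRing_ball, abs, minus, plus, opp; simpl. tauto. Qed.

Lemma eps_cont (f : R -> R) x :
  (forall eps, 0 < eps -> exists d, 0 < d /\ forall y, Rabs (y - x) < d -> Rabs (f y - f x) < eps) ->
  continuous f x.
Proof.
  intros H. apply filterlim_locally. intros eps.
  destruct (H eps (cond_pos eps)) as [d [Hd Hy]].
  exists (mkposreal d Hd). intros y Hy'. apply ball_R. apply Hy. apply ball_R. exact Hy'.
Qed.

Lemma locally_interval a b x (P : R -> Prop) : a < x < b -> (forall y, a < y < b -> P y) -> locally x P.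
Proof.
  intros Hx H. assert (Hp : 0 < Rmin (x - a) (b - x)) by (apply Rmin_pos; lra).
  exists (mkposreal _ Hp). intros y Hy. apply ball_R in Hy. simpl in Hy.
  apply H. apply Rabs_def2 in Hy. destruct Hy.
  assert (Rmin (x - a) (b - x) <= x - a) by apply Rmin_l.
  assert (Rmin (x - a) (b - x) <= b - x) by apply Rmin_r. unfold minus, plus, opp in *; simpl in *. lra.
Qed.

Lemma cpt (f : R -> R) x : continuous f x -> continuity_pt f x.
Proof. intros H; apply continuity_pt_filterlim; exact H. Qed.

Definition cl a b y := Rmin b (Rmax a y).
Lemma cl_in a b y : a <= b -> a <= cl a b y <= b.
Proof. intros. unfold cl, Rmin, Rmax. repeat destruct Rle_dec; lra. Qed.
Lemma cl_id a b y : a <= y <= b -> cl a b y = y.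
Proof. intros. unfold cl, Rmin, Rmax. repeat destruct Rle_dec; lra. Qed.
Lemma cl_lip a b x y : a <= b -> Rabs (cl a b y - cl a b x) <= Rabs (y - x).
Proof.
  intros. pose proof (Rle_abs (y - x)). pose proof (Rle_abs (-(y - x))). rewrite Rabs_Ropp in H1.
  unfold cl, Rmin, Rmax. repeat destruct Rle_dec; apply Rabs_le; split; lra.
Qed.

Definition wcont (phi : R -> R) (I : R -> Prop) :=
  forall t, I t -> forall eps, 0 < eps -> exists d, 0 < d /\
    forall s, I s -> Rabs (s - t) < d -> Rabs (phi s - phi t) < eps.

Lemma clamp_cont (phi : R -> R) a b : a <= b -> wcont phi (fun s => a <= s <= b) ->
  forall x, continuous (fun y => phi (cl a b y)) x.
Proof.
  intros Hab Hw x. apply eps_cont. intros eps He.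
  destruct (Hw (cl a b x) (cl_in a b x Hab) eps He) as [d [Hd H]].
  exists d. split; auto. intros y Hy. apply H. apply cl_in; auto.
  eapply Rle_lt_trans. apply cl_lip; auto. auto.
Qed.

Lemma cl_cont a b x : a <= b -> continuous (cl a b) x.
Proof.
  intros Hab. apply eps_cont. intros eps He. exists eps. split; auto. intros y Hy.
  eapply Rle_lt_trans. apply cl_lip; auto. auto.
Qed.

Lemma gronwall_loc (phi : R -> R) a b C :
  a < b -> 0 <= C -> wcont phi (fun s => a <= s <= b) ->
  (forall t, a < t < b -> exists dd, is_derive phi t dd /\ dd <= C * phi t) ->
  phi a = 0 -> (forall t, a <= t <= b -> 0 <= phi t) ->
  forall t, a <= t <= b -> phi t = 0.
Proof.
  intros Hab HC Hw Hd Ha Hpos t Ht.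
  destruct (Req_dec t a) as [->|Hta]; auto.
  set (chi := fun y => phi (cl a b y) * exp (- C * (cl a b y - a))).
  assert (Cphi := clamp_cont phi a b ltac:(lra) Hw).
  assert (Ccl : forall z, continuous (cl a b) z) by (intros; apply cl_cont; lra).
  assert (Cexp : forall z, continuous exp z) by apply continuous_exp.
  destruct (MVT_gen chi a t (fun x => Rmin 0 (Derive chi x))) as [xi [Hxi E]].
  - intros x Hx. rewrite Rmin_left, Rmax_right in Hx by lra.
    destruct (Hd x ltac:(lra)) as [dd [Hdd Hle]].
    assert (HD : is_derive chi x ((dd - C * phi x) * exp (- C * (x - a)))).
    { apply (is_derive_ext_loc (fun y => phi y * exp (- C * (y - a)))).
      apply (locally_interval a b). lra. intros y Hy. unfold chi. rewrite cl_id by lra. reflexivity.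
      eapply is_derive_eq. apply dR_mult. apply Hdd. auto_derive; auto.
      cbv beta. replace (x + - a) with (x - a) by ring. ring. }
    rewrite (is_derive_unique _ _ _ HD). rewrite Rmin_right. auto.
    assert (0 < exp (- C * (x - a))) by apply exp_pos.
    apply Rmult_le_0_r; lra.
  - intros x _. apply cpt. unfold chi. cont.
  - rewrite Rmin_left, Rmax_right in Hxi by lra.
    assert (Hr : Rmin 0 (Derive chi xi) <= 0) by apply Rmin_l.
    set (r := Rmin 0 (Derive chi xi)) in *.
    unfold chi in E. rewrite !cl_id in E by lra. rewrite Ha in E.
    assert (phi t * exp (- C * (t - a)) <= 0).
    { assert (0 <= t - a) by lra. assert (r * (t - a) <= 0) by nra. lra. }
    assert (0 < exp (- C * (t - a))) by apply exp_pos.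
    specialize (Hpos t Ht). nra.
Qed.

Lemma const_loc (phi : R -> R) a b :
  a < b -> wcont phi (fun s => a <= s <= b) ->
  (forall t, a < t < b -> is_derive phi t 0) ->
  forall t, a <= t <= b -> phi t = phi a.
Proof.
  intros Hab Hw Hd t Ht.
  destruct (Req_dec t a) as [->|Hta]; auto.
  set (chi := fun y => phi (cl a b y)).
  assert (Cphi := clamp_cont phi a b ltac:(lra) Hw).
  destruct (MVT_gen chi a t (fun _ => 0)) as [xi [Hxi E]].
  - intros x Hx. rewrite Rmin_left, Rmax_right in Hx by lra.
    apply (is_derive_ext_loc phi).
    apply (locally_interval a b). lra. intros y Hy. unfold chi. rewrite cl_id by lra. reflexivity.
    apply Hd; lra.
  - intros x _. apply continuity_pt_filterlim. apply Cphi.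
  - unfold chi in E. rewrite !cl_id in E by lra. lra.
Qed.

Lemma zero_prop (phi : R -> R) T :
  0 < T -> (forall t, 0 <= t < T -> 0 <= phi t) ->
  wcont phi (fun s => 0 <= s < T) -> phi 0 = 0 ->
  (forall t0, 0 <= t0 < T -> phi t0 = 0 ->
     exists d, 0 < d /\ forall s, t0 <= s < T -> s < t0 + d -> phi s = 0) ->
  forall t, 0 <= t < T -> phi t = 0.
Proof.
  intros HT Hpos Hw H0 Hstep.
  set (A := fun x => 0 <= x < T /\ forall s, 0 <= s <= x -> phi s = 0).
  assert (HA0 : A 0) by (split; [lra | intros s Hs; replace s with 0 by lra; auto]).
  assert (Hb : bound A) by (exists T; intros x [Hx _]; lra).
  destruct (completeness A Hb (ex_intro _ 0 HA0)) as [m [Hub Hlub]].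
  assert (Hm0 : 0 <= m) by (apply Hub; auto).
  assert (HmT : m <= T) by (apply Hlub; intros x [Hx _]; lra).
  assert (Hbelow : forall s, 0 <= s < m -> phi s = 0).
  { intros s Hs. destruct (classic (exists x, A x /\ s < x)) as [[x [[_ Hx] Hsx]]|Hn].
    - apply Hx; lra.
    - exfalso. assert (m <= s). { apply Hlub. intros x Hx. destruct (Rle_or_lt x s); auto. exfalso; apply Hn; eauto. }
      lra. }
  assert (HmT' : m = T).
  { destruct (Req_dec m T); auto. exfalso.
    assert (HmT2 : m < T) by (destruct HmT; auto; contradiction).
    assert (Hphim : phi m = 0).
    { destruct (Req_dec m 0) as [->|Hm0']. auto.
      assert (Hm1 : 0 < m) by (destruct Hm0; auto; subst; contradiction).
      destruct (Req_dec (phi m) 0); auto. exfalso.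
      assert (Hpm : 0 < Rabs (phi m)) by (apply Rabs_pos_lt; auto).
      destruct (Hw m ltac:(lra) _ Hpm) as [d [Hd Hc]].
      set (s := Rmax 0 (m - d/2)).
      assert (Hs0 : 0 <= s) by apply Rmax_l. assert (Hs1 : m - d/2 <= s) by apply Rmax_r.
      assert (Hs2 : s < m) by (unfold s; apply Rmax_case; lra).
      specialize (Hc s ltac:(lra)). rewrite Hbelow in Hc by lra.
      assert (Hsm : Rabs (s - m) < d) by (apply Rabs_def1; lra).
      specialize (Hc Hsm). rewrite Rminus_0_l, Rabs_Ropp in Hc. lra. }
    destruct (Hstep m ltac:(lra) Hphim) as [d [Hd Hz]].
    set (x := Rmin (m + d/2) ((m + T)/2)).
    assert (Hx1 : x <= m + d/2) by apply Rmin_l. assert (Hx2 : x <= (m+T)/2) by apply Rmin_r.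
    assert (Hx3 : m < x) by (unfold x; apply Rmin_case; lra).
    assert (HAx : A x).
    { split. lra. intros s Hs. destruct (Rlt_or_le s m). apply Hbelow; lra. apply Hz; lra. }
    specialize (Hub x HAx). lra. }
  intros t Ht. apply Hbelow. lra.
Qed.

Lemma fin_delta N (Q : nat -> R -> Prop) :
  (forall j, (j < N)%nat -> exists d, 0 < d /\ forall s, Rabs s < d -> Q j s) ->
  exists d, 0 < d /\ forall j, (j < N)%nat -> forall s, Rabs s < d -> Q j s.
Proof.
  induction N; intros H.
  - exists 1. split. lra. intros; lia.
  - destruct IHN as [d1 [Hd1 H1]]. intros; apply H; lia.
    destruct (H N ltac:(lia)) as [d2 [Hd2 H2]].
    exists (Rmin d1 d2). split. apply Rmin_pos; auto.
    intros j Hj s Hs. destruct (Nat.eq_dec j N) as [->|Hne].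
    + apply H2. eapply Rlt_le_trans. apply Hs. apply Rmin_r.
    + apply H1. lia. eapply Rlt_le_trans. apply Hs. apply Rmin_l.
Qed.

Lemma fin_bound N (Q : nat -> R -> Prop) :
  (forall j, (j < N)%nat -> exists B, Q j B) -> (forall j B B', Q j B -> B <= B' -> Q j B') ->
  exists B, forall j, (j < N)%nat -> Q j B.
Proof.
  intros H Hmon. induction N.
  - exists 0. intros; lia.
  - destruct IHN as [B1 H1]. intros; apply H; lia.
    destruct (H N ltac:(lia)) as [B2 H2].
    exists (Rmax B1 B2). intros j Hj. destruct (Nat.eq_dec j N) as [->|Hne].
    + eapply Hmon. apply H2. apply Rmax_r.
    + eapply Hmon. apply H1. lia. apply Rmax_l.
Qed.


Lemma wcont_mono (phi : R -> R) (I J : R -> Prop) : wcont phi I -> (forall s, J s -> I s) -> wcont phi J.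
Proof.
  intros H HJ t Jt eps He. destruct (H t (HJ t Jt) eps He) as [d [Hd Hs]].
  exists d. split; auto.
Qed.

Lemma sumR_nonneg N f : (forall i, (i < N)%nat -> 0 <= f i) -> 0 <= sumR N f.
Proof. induction N; simpl; intros. lra. specialize (IHN (fun i Hi => H i ltac:(lia))). specialize (H N ltac:(lia)). lra. Qed.

Theorem theorem3p10 (L : R) (N : nat) (D : nat -> R) (h : nat -> nat -> R)
  (K : R -> R) (u0 : nat -> R -> R) (Tstar : Rbar) (u : nat -> R -> R -> R) :
  0 < L ->
  (1 <= N)%nat ->
  (forall i, (i < N)%nat -> 0 < D i) ->
  admissible_kernel L K ->
  (forall i, (i < N)%nat -> C2per L (u0 i)) ->
  (forall i x, (i < N)%nat -> 0 < u0 i x) ->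
  Rbar_lt (Finite 0) Tstar ->
  is_solution L N D h K u0 Tstar u ->
  is_Tstar L N u0 u Tstar ->
  Tstar = p_infty.
Proof.
  intros HL HN HD HK Hu0 Hpos0 HT Hsol HTs.
  destruct HTs as [[-> _] | [T' [-> [Hlt Hlim]]]]; [reflexivity|].
  exfalso. simpl in HT.
  destruct HK as [PK [_ [_ [_ [_ [_ [HKd [M HM]]]]]]]].
  assert (HK1 : forall x, ex_derive K x) by (intros; apply HKd).
  assert (HK2 : forall x, ex_derive (Derive K) x) by (intros; apply HKd).
  destruct Hsol as [S0 [S1 [S2 [S3 _]]]].
  set (IT := fun s => 0 <= s < T').
  assert (Hin : forall s, IT s -> in_time (Finite T') s) by (intros s Hs; unfold in_time; simpl; unfold IT in Hs; lra).
  assert (C2 : forall j s, (j < N)%nat -> IT s -> C2per L (u j s)) by (intros; apply S1; auto).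
  assert (Cu : forall j s, (j < N)%nat -> IT s -> forall x, continuous (u j s) x).
  { intros j s Hj Hs. destruct (C2_facts L _ (C2 j s Hj Hs)) as [_ [_ [_ [_ [_ [C0 _]]]]]]. auto. }
  assert (Un : forall j t k, (j < N)%nat -> IT t -> (k <= 2)%nat -> forall eps, 0 < eps -> exists d, 0 < d /\
            forall s, IT s -> Rabs (s - t) < d -> forall x, Rabs (Derive_n (u j s) k x - Derive_n (u j t) k x) < eps).
  { intros j t k Hj Ht Hk eps He. destruct (S2 j t Hj (Hin t Ht) eps He) as [d [Hd H]].
    exists d. split; [auto|]. intros s Hs Hst x. apply H; auto. }
  assert (Un0 : forall j t, (j < N)%nat -> IT t -> forall eps, 0 < eps -> exists d, 0 < d /\
            forall s, IT s -> Rabs (s - t) < d -> forall x, Rabs (u j s x - u j t x) < eps).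
  { intros j t Hj Ht eps He. exact (Un j t 0%nat Hj Ht ltac:(lia) eps He). }
  assert (Nb : forall t, 0 < t < T' -> exists d, 0 < d /\ forall s, Rabs (s - t) < d -> IT s).
  { intros t Ht. exists (Rmin t (T' - t)). split. apply Rmin_pos; lra.
    intros s Hs. assert (Rmin t (T' - t) <= t) by apply Rmin_l. assert (Rmin t (T' - t) <= T' - t) by apply Rmin_r.
    apply Rabs_def2 in Hs. unfold IT. lra. }
  assert (Hrem : remhyp Fneg dFneg 3) by (intros a b; apply Fn_rem).
  assert (Pos : forall i, (i < N)%nat -> forall t, IT t -> forall x, 0 <= x <= L -> 0 <= u i t x).
  { intros i Hi.
    set (phi := fun s => RInt (fun x => Fneg (u i s x)) 0 L).
    assert (Hw : wcont phi IT).
    { intros t Ht. apply (time_cont L (u i) Fneg dFneg 3 t IT);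
      first [lra | apply Fn_cont | apply dFn_cont | exact Hrem | solve [intros; apply Cu; auto]
            | solve [intros; apply Un0; auto] | assumption]. }
    assert (Hp : forall t, IT t -> 0 <= phi t).
    { intros t Ht. apply RInt_ge_0. lra. apply exR. intros; assert (CF := Fn_cont); assert (Cut := Cu i t Hi Ht); cont.
      intros; apply Fn_ge0. }
    assert (H0 : phi 0 = 0).
    { unfold phi. rewrite (RInt_ext0 _ (fun _ => 0)). rewrite RInt_constR. apply eqR; ring. lra.
      intros x Hx. apply Fn_pos0. rewrite S0 by auto. left; apply Hpos0; auto. }
    assert (Hstep : forall t0, 0 <= t0 < T' -> phi t0 = 0 ->
              exists d, 0 < d /\ forall s, t0 <= s < T' -> s < t0 + d -> phi s = 0).
    { intros t0 Ht0 Hphi0.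
      destruct (fin_bound N (fun j B => forall y, 0 <= y <= L -> Rabs (Derive (u j t0) y) <= B)) as [B HB].
      { intros j Hj. destruct (bound_cont (Derive (u j t0)) 0 L) as [B [_ HB]]. lra.
        intros. destruct (C2_facts L _ (C2 j t0 Hj Ht0)) as [_ [_ [_ [_ [_ [_ [C1 _]]]]]]]. auto.
        exists B. auto. }
      { intros j B B' H1 H2 y Hy. eapply Rle_trans. apply H1; auto. auto. }
      assert (HB0 : 0 <= B) by (eapply Rle_trans; [apply Rabs_pos | apply (HB 0%nat ltac:(lia) 0); lra]).
      destruct (fin_delta N (fun j r => IT (t0 + r) -> forall x, Rabs (Derive (u j (t0 + r)) x - Derive (u j t0) x) < 1))
        as [dl [Hdl Hdl']].
      { intros j Hj. destruct (Un j t0 1%nat Hj Ht0 ltac:(lia) 1 Rlt_0_1) as [d [Hd H]].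
        exists d. split; auto. intros r Hr HIT x.
        exact (H (t0 + r) HIT ltac:(replace (t0 + r - t0) with r by ring; auto) x). }
      assert (HM0 : 0 <= M) by (eapply Rle_trans; [apply Rabs_pos | apply (HM 0)]).
      set (Cc := sumR N (fun j => Rabs (h i j) * (L * ((B + 1) * M)))).
      assert (HCc : 0 <= Cc).
      { apply sumR_nonneg. intros j _. apply Rmult_le_pos. apply Rabs_pos.
        apply Rmult_le_pos. lra. apply Rmult_le_pos; lra. }
      set (b := Rmin (t0 + dl/2) ((t0 + T')/2)).
      assert (Hb1 : b <= t0 + dl/2) by apply Rmin_l.
      assert (Hb2 : b <= (t0 + T')/2) by apply Rmin_r.
      assert (Hb3 : t0 < b) by (unfold b; apply Rmin_case; lra).
      assert (Hz : forall s, t0 <= s <= b -> phi s = 0).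
      { apply (gronwall_loc phi t0 b (2 * Cc)); auto. lra.
        - apply (wcont_mono phi IT); auto. intros s Hs; unfold IT; lra.
        - intros t Ht. assert (Ht' : IT t) by (unfold IT; lra).
          assert (Ht0' : 0 < t) by lra.
          exists (RInt (fun x => dFneg (u i t x) * rhs L N D h K u i t x) 0 L). split.
          + apply (time_deriv L (u i) (rhs L N D h K u i t) Fneg dFneg 3 t IT);
            first [lra | apply Fn_cont | apply dFn_cont | exact Hrem | solve [intros; apply Cu; auto]
              | solve [intros; apply rhs_cont; auto; intros; apply C2; auto] | solve [apply Nb; lra]
              | solve [intros; apply Un0; auto] | solve [apply S3; auto]].
          + apply (energy L N D h K u i t Cc); [lra | exact PK | exact HK1 | exact HK2
              | intros; apply C2; auto | exact Hi | apply HD; exact Hi | ].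
            intros x Hx. apply (V2_bound L N h K u i t M (fun _ => B + 1)); [lra | exact PK | exact HK1 | exact HK2
              | exact HM | intros; apply C2; auto | ].
            intros j Hj y Hy.
            assert (Hr : Rabs (t - t0) < dl) by (apply Rabs_def1; lra).
            specialize (Hdl' j Hj (t - t0) Hr). replace (t0 + (t - t0)) with t in Hdl' by ring.
            specialize (Hdl' Ht' y). specialize (HB j Hj y Hy).
            apply Rabs_def2 in Hdl'. destruct Hdl'.
            apply Rabs_le_between in HB. apply Rabs_le. lra.
        - intros s Hs. apply Hp. unfold IT; lra. }
      exists (b - t0). split. lra. intros s Hs Hsb. apply Hz. lra. }
    intros t Ht x Hx.
    assert (Hphi : phi t = 0) by (apply (zero_prop phi T'); auto; lra).
    apply Fn_zero.
    apply (int0_pos L (fun x => Fneg (u i t x))); auto.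
    intros; assert (CF := Fn_cont); assert (Cut := Cu i t Hi Ht); cont.
    intros; apply Fn_ge0. }
  assert (Mass : forall i, (i < N)%nat -> forall t, IT t ->
             RInt (fun x => u i t x) 0 L = RInt (fun x => u i 0 x) 0 L).
  { intros i Hi t Ht. destruct (Req_dec t 0) as [->|Ht0]. reflexivity.
    assert (Htp : 0 < t) by (unfold IT in Ht; lra).
    assert (Hremid : remhyp (fun v => v) (fun _ => 1) 0).
    { intros a b. replace (a - b - 1 * (a - b)) with 0 by ring. rewrite Rabs_R0. lra. }
    apply (const_loc (fun s => RInt (fun x => u i s x) 0 L) 0 t); auto.
    - apply (wcont_mono _ IT). intros t1 Ht1.
      apply (time_cont L (u i) (fun v => v) (fun _ => 1) 0 t1 IT);
        first [lra | solve [intros; apply cR_id] | solve [intros; apply cR_const] | exact Hremid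
              | solve [intros; apply Cu; auto] | solve [intros; apply Un0; auto] | assumption].
      intros s Hs; unfold IT in *; lra.
    - intros t1 Ht1. assert (Ht1' : IT t1) by (unfold IT in *; lra).
      eapply is_derive_eq.
      apply (time_deriv L (u i) (rhs L N D h K u i t1) (fun v => v) (fun _ => 1) 0 t1 IT);
        first [lra | solve [intros; apply cR_id] | solve [intros; apply cR_const] | exact Hremid
              | solve [intros; apply Cu; auto]
              | solve [intros; apply rhs_cont; auto; intros; apply C2; auto] | solve [apply Nb; lra]
              | solve [intros; apply Un0; auto] | solve [apply Nb; unfold IT in *; lra]
              | solve [apply S3; auto; lra]].
      exact (mass_int L N D h K u i t1 PK HK1 HK2 (fun j Hj => C2 j t1 Hj Ht1') Hi).
    - lra. }
  set (m := L1norm L N u0).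
  assert (Hm : 0 < m).
  { unfold m, L1norm. apply sumR_pos; auto. intros i Hi.
    destruct (C2_facts L _ (Hu0 i Hi)) as [_ [_ [_ [_ [_ [C0 _]]]]]].
    apply RInt_gt_0; auto. intros x _. apply Rabs_pos_lt. specialize (Hpos0 i x Hi). lra.
    intros; cont. }
  assert (Key : forall t, 0 < t < T' -> L1norm L N (fun i => u i t) = m).
  { intros t Ht. assert (Ht' : IT t) by (unfold IT; lra). unfold m, L1norm. apply sumR_ext. intros i Hi.
    rewrite (RInt_ext0 _ (fun x => u i t x)). 2: lra.
    2: { intros x Hx. apply Rabs_pos_eq. apply Pos; auto. }
    rewrite Mass by auto.
    apply RInt_ext0. lra. intros x Hx. rewrite S0 by auto. symmetry. apply Rabs_pos_eq. left; apply Hpos0; auto. }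
  assert (Hlim2 : filterlim (fun t => L1norm L N (fun i => u i t)) (at_left T') (locally m)).
  { apply (filterlim_ext_loc (fun _ => m)).
    exists (mkposreal T' HT). intros t Ht Htl. apply ball_R in Ht. simpl in Ht.
    apply Rabs_def2 in Ht. symmetry. apply Key. unfold minus, plus, opp in Ht; simpl in Ht. lra.
    apply filterlim_const. }
  assert (E : 2 * L1norm L N u0 = m).
  { apply (@filterlim_locally_unique R R_AbsRing R_NormedModule (at_left T')
      (Proper_StrongProper _ (at_left_proper_filter T')) (fun t => L1norm L N (fun i => u i t))); assumption. }
  unfold m in *. lra.
Qed.
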